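(* For any two-element set $E=\{x,y\}\subset\mathbb{N}$ we have $A_E=\{2\}\cup\Pi_x\cup\Pi_y\cup\Pi_{x-y}$.
   Context: $\mathbb{N}=\{1,2,3,\dots\}$; $\Pi$ is the set of primes; for a nonzero integer $z$, $\Pi_z$ is the set of prime divisors of $z$. For a nonempty finite set $E\subseteq\mathbb{N}$, $A_E=\{p\in\Pi:\exists k\in\mathbb{N}\ (E\subseteq\{0,k\}+p\mathbb{Z})\}$, where $\{0,k\}+p\mathbb{Z}=p\mathbb{Z}\cup(k+p\mathbb{Z})$. *)

(* Defs.v *)
From Stdlib Require Import ZArith Znumtheory List.
Open Scope Z_scope.

Definition Pi (z : Z) (p : Z) : Prop := prime p /\ (p | z).

(* {0,k} + pZ  =  pZ \/ (k + pZ) *)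
Definition in_0k_pZ (k p e : Z) : Prop := (p | e) \/ (p | e - k).

(* A_E for a finite set E ⊆ N = {1,2,...}, given by a list of its elements:
   A_E = { p prime : exists k in N, E ⊆ {0,k} + pZ } *)
Definition A (E : list Z) (p : Z) : Prop :=
  prime p /\ exists k : Z, 1 <= k /\ forall e, In e E -> in_0k_pZ k p e.

(* Main.v *)
Require Import Defs.
From Stdlib Require Import ZArith Znumtheory List Lia.
Open Scope Z_scope.

Lemma two_cases (e : Z) : (2 | e) \/ (2 | e - 1).
Proof.
  pose proof (Z.div_mod e 2 ltac:(lia)) as H.
  pose proof (Z.mod_pos_bound e 2 ltac:(lia)) as B.
  destruct (Z.eq_dec (e mod 2) 0) as [E|E].
  - left. exists (e / 2). lia.
  - right. exists (e / 2). lia.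
Qed.

Theorem lemma3p2 (x y : Z) (hx : 1 <= x) (hy : 1 <= y) (hxy : x <> y) :
  forall p : Z,
    A (x :: y :: nil) p <-> (p = 2 \/ Pi x p \/ Pi y p \/ Pi (x - y) p).
Proof.
  intros p. unfold A, Pi, in_0k_pZ. split.
  - intros [Hp [k [Hk H]]].
    destruct (H x (or_introl eq_refl)) as [H1|H1];
      [right; left; auto|].
    destruct (H y (or_intror (or_introl eq_refl))) as [H2|H2];
      [right; right; left; auto|].
    right; right; right. split; auto.
    replace (x - y) with ((x - k) - (y - k)) by ring.
    apply Z.divide_sub_r; auto.
  - intros [E|[[Hp D]|[[Hp D]|[Hp D]]]].
    + subst p. split; [exact prime_2|].
      exists 1. split; [lia|]. intros e _. apply two_cases.
    + split; auto. exists y. split; auto.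
      intros e [<-|[<-|[]]]; [left; auto|right].
      replace (y - y) with 0 by ring. apply Z.divide_0_r.
    + split; auto. exists x. split; auto.
      intros e [<-|[<-|[]]]; [right|left; auto].
      replace (x - x) with 0 by ring. apply Z.divide_0_r.
    + split; auto. exists x. split; auto.
      intros e [<-|[<-|[]]]; right.
      * replace (x - x) with 0 by ring. apply Z.divide_0_r.
      * replace (y - x) with (- (x - y)) by ring. apply Z.divide_opp_r; auto.
Qed.
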